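(* Assume $\Theta_0\neq\emptyset$. For a menu $\mathcal{F}\subseteq\bar{\mathcal{F}}$ (for which the standing attainment assumption holds), the equality $$\inf_{Q} U(Q,\mathcal{F}) \;=\; \sup_{\mathcal{F}'\subseteq\bar{\mathcal{F}}}\ \inf_{Q} U(Q,\mathcal{F}')$$ (maximin optimality; infima over all probability distributions $Q$ on $\Theta$, suprema over menus $\mathcal{F}'\subseteq\bar{\mathcal{F}}$ satisfying the attainment assumption) holds if and only if the menu $\mathcal{F}$ is incentive-aligned.
   Context: Let $\Theta$ be a set of types partitioned as $\Theta=\Theta_0\sqcup\Theta_1$ (null and nonnull types), and let $(P_\theta)_{\theta\in\Theta}$ be probability distributions on a measurable space $\mathcal{Z}$; $\mathbb{E}_\theta$ denotes expectation with $Z\sim P_\theta$. Fix a cost $C>0$. Fix an ambient class $\bar{\mathcal{F}}$ of measurable functions $f:\mathcal{Z}\to[0,\infty)$ (''license functions'') with $\mathbb{E}_\theta[f(Z)]<\infty$ for all $\theta$. A menu is a subset $\mathcal{F}\subseteq\bar{\mathcal{F}}$; it is assumed (attainment assumption) that for every $\theta$, $\sup_{f\in\mathcal{F}}\mathbb{E}_\theta[f(Z)]$ is attained when $\mathcal{F}\ne\emptyset$. Agent behavior: an agent of type $\theta$ offered $\mathcal{F}$ opts in ($I=1$) iff $\mathcal{F}\neq\emptyset$ and $\max_{f\in\mathcal{F}}\mathbb{E}_\theta[f(Z)]>C$, in which case it selects some maximizer $f^{\mathrm{br}}(\cdot;\theta,\mathcal{F})\in\arg\max_{f\in\mathcal{F}}\mathbb{E}_\theta[f(Z)]$;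 otherwise it opts out ($I=0$). The realized license is $L=f^{\mathrm{br}}(Z;\theta,\mathcal{F})$ with $Z\sim P_\theta$. The principal's utility is a function $u:\Theta\times[0,\infty)\to\mathbb{R}$ such that: for $\theta\in\Theta_1$, $u(\theta,\cdot)$ is nondecreasing and $0\le u(\theta,L)\le a_1$ for some constant $a_1<\infty$; for $\theta\in\Theta_0$, $u(\theta,\cdot)$ is nonincreasing, $u(\theta,0)\le 0$ and $u(\theta,L)<0$ for all $L>0$. For a probability distribution $Q$ on $\Theta$, the principal's expected utility is $U(Q,\mathcal{F})=\mathbb{E}_{\theta\sim Q}\big[\mathbb{E}_{Z\sim P_\theta}[u(\theta,L)\cdot I\mid\theta]\big]$ (measurability assumed as needed). A menu $\mathcal{F}$ is incentive-aligned if $\mathbb{E}_\theta[f(Z)]\le C$ for all $\theta\in\Theta_0$ and all $f\in\mathcal{F}$. *)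

(* Defs.v *)
From HB Require Import structures.
From mathcomp Require Import all_boot all_order all_algebra.
From mathcomp Require Import all_classical all_reals all_analysis measurable_realfun.
Set Implicit Arguments. Unset Strict Implicit. Unset Printing Implicit Defensive.
Import Order.TTheory GRing.Theory Num.Theory.
Local Open Scope classical_set_scope.
Local Open Scope ring_scope.

Section Screening.
Context {R : realType} {dZ dT : measure_display}
        {Z : measurableType dZ} {T : measurableType dT}.

Definition expect (P : probability Z R) (f : Z -> R) : \bar R :=
  (\int[P]_z (f z)%:E)%E.

Definition license_class (P : T -> probability Z R) (Fbar : set (Z -> R)) :=
  forall f, Fbar f ->
    [/\ measurable_fun setT f, (forall z, 0 <= f z) &
        forall th, (P th).-integrable setT (fun z => (f z)%:E)].

Definition attains (P : T -> probability Z R) (F : set (Z -> R)) :=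
  forall th, F !=set0 ->
    exists2 f, F f & forall g, F g -> (expect (P th) g <= expect (P th) f)%E.

Definition menu (P : T -> probability Z R) (Fbar : set (Z -> R))
  (F : set (Z -> R)) := F `<=` Fbar /\ attains P F.

Definition opts_in (P : T -> probability Z R) (C : R) (th : T)
  (F : set (Z -> R)) :=
  F !=set0 /\ (C%:E < ereal_sup [set expect (P th) f | f in F])%E.

Definition best_response (P : T -> probability Z R) (Fbar : set (Z -> R))
  (br : T -> set (Z -> R) -> Z -> R) :=
  forall F, menu P Fbar F -> forall th, F !=set0 ->
    F (br th F) /\
    forall g, F g -> (expect (P th) g <= expect (P th) (br th F))%E.

(* principal utility assumptions; Theta_1 = complement of Theta_0 *)
Definition utility_ok (Th0 : set T) (u : T -> R -> R) (a1 : R) :=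
  [/\ (forall th L L', ~ Th0 th -> 0 <= L -> L <= L' -> u th L <= u th L'),
      (forall th L, ~ Th0 th -> 0 <= L -> 0 <= u th L <= a1),
      (forall th L L', Th0 th -> 0 <= L -> L <= L' -> u th L' <= u th L),
      (forall th, Th0 th -> u th 0 <= 0) &
      (forall th L, Th0 th -> 0 < L -> u th L < 0)].

(* E_{Z ~ P_theta}[u(theta, L) * I | theta] *)
Definition cond_value (u : T -> R -> R) (P : T -> probability Z R) (C : R)
  (br : T -> set (Z -> R) -> Z -> R) (th : T) (F : set (Z -> R)) : \bar R :=
  if `[< opts_in P C th F >] then (\int[P th]_z (u th (br th F z))%:E)%E
  else 0%E.

Definition U (u : T -> R -> R) (P : T -> probability Z R) (C : R)
  (br : T -> set (Z -> R) -> Z -> R) (Q : probability T R)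
  (F : set (Z -> R)) : \bar R :=
  (\int[Q]_th cond_value u P C br th F)%E.

Definition worst_case (u : T -> R -> R) (P : T -> probability Z R) (C : R)
  (br : T -> set (Z -> R) -> Z -> R) (F : set (Z -> R)) : \bar R :=
  ereal_inf (range (fun Q : probability T R => U u P C br Q F)).

Definition incentive_aligned (Th0 : set T) (P : T -> probability Z R) (C : R)
  (F : set (Z -> R)) :=
  forall th f, Th0 th -> F f -> (expect (P th) f <= C%:E)%E.

End Screening.

(* Main.v *)
Require Import Defs.
From HB Require Import structures.
From mathcomp Require Import all_boot all_order all_algebra.
From mathcomp Require Import all_classical all_reals all_analysis measurable_realfun.
Import Order.TTheory GRing.Theory Num.Theory.
Local Open Scope classical_set_scope.
Local Open Scope ring_scope.

Lemma neg_int (R : realType) d (Z : measurableType d) (mu : probability Z R)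
  (g : Z -> R) (v : R -> R) :
  measurable_fun setT g -> (forall z, 0 <= g z) ->
  (0 < \int[mu]_z (g z)%:E)%E ->
  (forall L L', 0 <= L -> L <= L' -> v L' <= v L) ->
  (forall L, 0 < L -> v L < 0) -> v 0 <= 0 ->
  (\int[mu]_z (v (g z))%:E < 0)%E.
Proof.
move=> mg g0 gpos vni vneg v00.
have vle0 : forall L, 0 <= L -> v L <= 0.
  by move=> L L0; apply: le_trans (vni _ _ (lexx 0) L0) v00.
pose w L := v (Num.max L 0).
have mw : measurable_fun setT w.
  apply: nonincreasing_measurable => // x y xy; rewrite /w.
  apply: vni; first by rewrite le_max lexx orbT.
  by rewrite ge_max !le_max xy lexx !orbT.
have mh : measurable_fun setT (fun z => (v (g z))%:E).
  apply/measurable_EFinP.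
  have -> : (fun z => v (g z)) = (fun z => w (g z)).
    by apply/funext => z; rewrite /w max_l.
  exact: measurableT_comp.
pose A := g @^-1` `]0, +oo[.
have mA : measurable A.
  by have := mg measurableT _ (measurable_itv `]0, +oo[); rewrite setTI.
pose An (n : nat) := g @^-1` `](n.+1%:R)^-1, +oo[.
have mAn n : measurable (An n).
  by have := mg measurableT _ (measurable_itv `](n.+1%:R)^-1, +oo[); rewrite setTI.
have muA : mu A != 0%E.
  apply/negP => /eqP muA0.
  move: gpos; rewrite (ge0_negligible_integral _ _ _ _ muA0) //; last 2 first.
    exact/measurable_EFinP.
    by move=> z _; rewrite lee_fin.
  rewrite integral0_eq ?ltxx // => z [_]; rewrite /A /= in_itv /= andbT => gz.
  by congr (_%:E); apply/eqP; rewrite eq_le g0 andbT leNgt; apply/negP.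
have [n muAn] : exists n, mu (An n) != 0%E.
  apply: contrapT => H.
  have H' : forall n, mu.-negligible (An n).
    move=> n; exists (An n); split => //; apply: contrapT => Hn.
    by apply: H; exists n; apply/eqP.
  have [N [mN muN AN]] := negligible_bigcup H'.
  move: muA; apply/negP; rewrite negbK eq_le measure_ge0 andbT -muN.
  apply: le_measure; rewrite ?inE //.
  move=> z; rewrite /A /= in_itv /= andbT => gz; apply: AN.
  exists (Num.truncn (g z)^-1) => //; rewrite /An /= in_itv /= andbT.
  rewrite -[ltRHS]invrK ltf_pV2 ?Num.Theory.truncnS_gt //.
    by rewrite posrE ltr0n.
  by rewrite posrE invr_gt0.
set c := v (n.+1%:R)^-1.
have c0 : c < 0 by apply: vneg; rewrite invr_gt0 ltr0n.
have h0 : forall z, (0 <= - (v (g z))%:E)%E.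
  by move=> z; rewrite oppe_ge0 lee_fin vle0.
have -> : (\int[mu]_z (v (g z))%:E = - \int[mu]_z (- (v (g z))%:E))%E.
  rewrite -(@integral_ge0N _ _ _ mu setT (fun z => (- (v (g z))%:E)%E)); last by move=> z _; exact: h0.
  by apply: eq_integral => z _; rewrite oppeK.
rewrite oppe_lt0.
apply: (@lt_le_trans _ _ (\int[mu]_(z in An n) (- (v (g z))%:E))%E); last first.
  apply: ge0_subset_integral => //.
  by apply: (measurableT_comp _ mh).
apply: (@lt_le_trans _ _ (\int[mu]_(z in An n) (cst (- c)%:E) z)%E).
  rewrite integral_cst // mule_gt0 // ?lte_fin ?oppr_gt0 //.
  by rewrite lt_neqAle eq_sym muAn measure_ge0.
apply: ge0_le_integral => //.
- by move=> z _; rewrite /= lee_fin oppr_ge0 ltW.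
- by apply: measurable_funS (measurableT_comp _ mh).
- move=> z; rewrite /An /= in_itv /= andbT => gz.
  rewrite lee_fin lerN2; apply: vni => //; exact: ltW.
Qed.

Lemma int_le0 (R : realType) d (Z : measurableType d) (mu : {measure set Z -> \bar R})
  (f : Z -> R) : (forall z, f z <= 0) -> (\int[mu]_z (f z)%:E <= 0)%E.
Proof.
move=> f0.
have e := @integral_ge0N _ _ _ mu setT (fun z => (- f z)%:E).
rewrite (eq_integral (fun z => (- (- f z)%:E)%E)); last first.
  by move=> z _; rewrite /= opprK.
rewrite e; last by move=> z _; rewrite lee_fin oppr_ge0.
by rewrite oppe_le0 integral_ge0 // => z _; rewrite lee_fin oppr_ge0.
Qed.

Theorem theorem2p2 (R : realType) (dZ dT : measure_display)
  (Z : measurableType dZ) (T : measurableType dT)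
  (Th0 : set T) (P : T -> probability Z R) (C : R) (Fbar : set (Z -> R))
  (u : T -> R -> R) (a1 : R) (br : T -> set (Z -> R) -> Z -> R)
  (F : set (Z -> R)) :
  0 < C ->
  license_class P Fbar ->
  utility_ok Th0 u a1 ->
  best_response P Fbar br ->
  (forall F', menu P Fbar F' ->
     measurable_fun setT (fun th : T => (cond_value u P C br th F' : \bar R))) ->
  Th0 !=set0 ->
  menu P Fbar F ->
  (worst_case u P C br F =
     ereal_sup [set worst_case u P C br F' | F' in menu P Fbar])
  <-> incentive_aligned Th0 P C F.
Proof.
move=> C0 Lc [u1nd u1b u0ni u00 u0neg] BR Meas [th0 Th0th0] MF.
have Udirac : forall F', menu P Fbar F' -> forall th,
    U u P C br (\d_th) F' = cond_value u P C br th F'.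
  move=> F' mF' th; rewrite /U integral_dirac ?diracT ?mul1e //.
  exact: Meas.
have wc_le : forall F', menu P Fbar F' -> forall th,
    (worst_case u P C br F' <= cond_value u P C br th F')%E.
  move=> G mG th; rewrite -(Udirac G mG); apply: ereal_inf_lbound.
  by exists (\d_th).
have brge0 : forall F', menu P Fbar F' -> forall th, F' !=set0 ->
    forall z, 0 <= br th F' z.
  move=> F' mF' th Fne z; have [Fb _] := BR F' mF' th Fne.
  by have [_ g0 _] := Lc _ (mF'.1 _ Fb); exact: g0.
have cond_le0 : forall F', menu P Fbar F' -> forall th, Th0 th ->
    (cond_value u P C br th F' <= 0)%E.
  move=> F' mF' th Hth; rewrite /cond_value; case: asboolP => // -[Fne _].
  apply: int_le0 => z; apply: le_trans (u00 _ Hth).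
  by apply: u0ni => //; exact: brge0.
have wc_le0 : forall F', menu P Fbar F' -> (worst_case u P C br F' <= 0)%E.
  by move=> F' mF'; apply: le_trans (wc_le _ mF' th0) (cond_le0 _ mF' _ Th0th0).
have m0 : menu P Fbar set0.
  by split; [exact: sub0set | move=> th [f []]].
have wc0 : (0 <= worst_case u P C br set0)%E.
  apply: le_ereal_inf_tmp => _ [Q _ <-]; apply: integral_ge0 => th _.
  by rewrite /cond_value; case: asboolP => // -[[f []]].
have supge0 : (0 <= ereal_sup [set worst_case u P C br F' | F' in menu P Fbar])%E.
  by apply: le_ereal_sup_tmp; exists (worst_case u P C br set0) => //; exists set0.
split.
- move=> Heq th f Hth Ff; rewrite leNgt; apply/negP => Hlt.
  have Fne : F !=set0 by exists f.
  have [Fb Fmax] := BR F MF th Fne.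
  have [mg g0 _] := Lc _ (MF.1 _ Fb).
  have oi : opts_in P C th F.
    split => //; apply: lt_le_trans Hlt _.
    by apply: le_ereal_sup_tmp; exists (expect (P th) f) => //; exists f.
  have neg : (cond_value u P C br th F < 0)%E.
    rewrite /cond_value; case: asboolP => // _.
    apply: neg_int => //.
    - apply: lt_le_trans (Fmax _ Ff); apply: le_lt_trans Hlt.
      by rewrite lee_fin ltW.
    - by move=> L L' L0 LL'; exact: u0ni.
    - by move=> L L0; exact: u0neg.
    - exact: u00.
  have := le_lt_trans (wc_le _ MF th) neg; rewrite Heq.
  by move=> /(le_lt_trans supge0); rewrite ltxx.
- move=> IA.
  have cge0 : forall th, (0 <= cond_value u P C br th F)%E.
    move=> th; rewrite /cond_value; case: asboolP => // -[Fne Hlt].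
    have [Hth|Hth] := pselect (Th0 th).
      exfalso; move: Hlt; apply/negP; rewrite -leNgt.
      by apply: ge_ereal_sup => _ [g Fg <-]; exact: IA.
    apply: integral_ge0 => z _; rewrite lee_fin.
    by have /andP[] := u1b th _ Hth (brge0 _ MF th Fne z).
  have wcge0 : (0 <= worst_case u P C br F)%E.
    apply: le_ereal_inf_tmp => _ [Q _ <-]; apply: integral_ge0 => th _.
    exact: cge0.
  apply/eqP; rewrite eq_le; apply/andP; split.
    by apply: le_ereal_sup_tmp; exists (worst_case u P C br F) => //; exists F.
  apply: ge_ereal_sup => _ [F' mF' <-].
  exact: le_trans (wc_le0 _ mF') wcge0.
Qed.
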